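(* For all sufficiently large integers $n$, \[ \frac{n^{\,n-\log n}\sqrt{n}\,\sqrt{2\pi}}{e^{n}}\;\leq\;\lambda(n)\;\leq\;\frac{n^{n}\sqrt{n}\,\sqrt{2\pi}}{2^{\log n}\,e^{n}} . \]
   Context: The rockers function $\lambda:\mathbb{N}\to\mathbb{R}^{+}$ is defined by $\lambda(1)=1$, $\lambda(2)=2$, and for $n\geq 3$, \[ \lambda(n)=2^{\frac{n-2}{n-1}}\,3^{\frac{n-3}{n-2}}\cdots (n-1)^{\frac{1}{2}}\, n=\prod_{k=0}^{n-2}(n-k)^{\frac{k}{k+1}} . \] $\log$ denotes the natural logarithm. *)

(* Defs.v *)
From Stdlib Require Import Reals.
Open Scope R_scope.

Fixpoint rock_prod (n : nat) (m : nat) : R :=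
  match m with
  | O => 1
  | S m' => rock_prod n m' * Rpower (INR (n - m)) (INR m / INR (m + 1))
  end.

(* Rockers function: lambda(n) = n * prod_{k=1}^{n-2} (n-k)^(k/(k+1)),
   i.e. 2^((n-2)/(n-1)) 3^((n-3)/(n-2)) ... (n-1)^(1/2) n.
   This gives lambda(1)=1, lambda(2)=2. lambda(0) is irrelevant (set to 0). *)
Definition rockers (n : nat) : R := INR n * rock_prod n (n - 2).

(* Main.v *)
Require Import Defs.
From Stdlib Require Import Reals Lra Lia.
From Coquelicot Require Import Coquelicot.
Open Scope R_scope.

Lemma exp_le x y : x <= y -> exp x <= exp y.
Proof. intros [H|H]. left; now apply exp_increasing. subst; lra. Qed.

Lemma ln_le_m x y : 0 < x -> x <= y -> ln x <= ln y.
Proof. intros Hx [H|H]. left; now apply ln_increasing. subst; lra. Qed.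

Lemma ln_sub1 z : 0 < z -> ln z <= z - 1.
Proof. intros Hz. pose proof (exp_ineq1_le (ln z)). rewrite exp_ln in H; lra. Qed.

Lemma ln_ge1 z : 0 < z -> 1 - / z <= ln z.
Proof. intros Hz. pose proof (ln_sub1 (/ z) ltac:(apply Rinv_0_lt_compat; lra)).
  rewrite ln_Rinv in H; lra. Qed.

Lemma mono_lemma (f df : R -> R) a b : a <= b ->
  (forall c, a <= c <= b -> is_derive f c (df c)) ->
  (forall c, a < c < b -> 0 <= df c) -> f a <= f b.
Proof.
  intros [Hab|Hab] Hd Hp; [|subst; lra].
  destruct (MVT_cor2 f df a b Hab) as [c [Hc1 Hc2]].
  { intros c Hc. apply is_derive_Reals. now apply Hd. }
  pose proof (Hp c Hc2). nra.
Qed.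

Lemma ln_I1 x : 0 <= x -> 2 * x / (2 + x) <= ln (1 + x).
Proof.
  intros Hx.
  assert (H := mono_lemma (fun t => ln (1 + t) - 2 * t / (2 + t))
    (fun t => t * t / ((1 + t) * (2 + t) * (2 + t))) 0 x Hx).
  simpl in H. replace (ln (1 + 0) - 2 * 0 / (2 + 0)) with 0 in H.
  2: { replace (1+0) with 1 by ring. rewrite ln_1. field. }
  enough (0 <= ln (1 + x) - 2 * x / (2 + x)) by lra.
  apply H.
  - intros c Hc. auto_derive. lra. field. lra.
  - intros c Hc. apply Rmult_le_pos. nra. left; apply Rinv_0_lt_compat.
    apply Rmult_lt_0_compat; [apply Rmult_lt_0_compat|]; lra.
Qed.

Lemma ln_I2 x : 0 <= x -> ln (1 + x) <= x - x^2/2 + x^3/3.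
Proof.
  intros Hx.
  assert (H := mono_lemma (fun t => t - t^2/2 + t^3/3 - ln (1 + t))
    (fun t => t * t * t / (1 + t)) 0 x Hx).
  cbv beta in H. replace (1+0) with 1 in H by ring. rewrite ln_1 in H.
  cut (0 - 0^2/2 + 0^3/3 - 0 <= x - x ^ 2 / 2 + x ^ 3 / 3 - ln (1 + x)). { simpl; lra. }
  apply H.
  - intros c Hc. auto_derive. lra. field. lra.
  - intros c Hc. apply Rmult_le_pos. assert (0 <= c*c) by nra. nra. left; apply Rinv_0_lt_compat. lra.
Qed.

Lemma ln2_le : ln 2 <= 71/100.
Proof.
  assert (E : 2 = (1 + 1/3) * (1 + 1/2)) by field.
  rewrite E, ln_mult by lra.
  pose proof (ln_I2 (1/3) ltac:(lra)). pose proof (ln_I2 (1/2) ltac:(lra)).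
  simpl in *. lra.
Qed.

Lemma ln3_ge : 1 <= ln 3.
Proof.
  rewrite <- (ln_exp 1) at 1. apply ln_le_m. apply exp_pos. apply exp_le_3.
Qed.

Fixpoint lnfact (n : nat) : R :=
  match n with O => 0 | S m => lnfact m + ln (INR (S m)) end.

Definition Dd (n : nat) : R :=
  lnfact n - INR n * ln (INR n) + INR n - ln (INR n) / 2.

Lemma Dd_step n : (1 <= n)%nat ->
  Dd (S n) = Dd n + 1 - (INR n + 1/2) * ln (1 + / INR n).
Proof.
  intros Hn. assert (Hr : 1 <= INR n) by (apply (le_INR 1); lia).
  unfold Dd. change (lnfact (S n)) with (lnfact n + ln (INR (S n))). rewrite S_INR.
  assert (E : ln (INR n + 1) = ln (INR n) + ln (1 + / INR n)).
  { rewrite <- ln_mult by (try apply Rplus_lt_0_compat; try apply Rinv_0_lt_compat; lra).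
    f_equal. field. lra. }
  rewrite E. field.
Qed.

Lemma Dd1 : Dd 1 = 1.
Proof. unfold Dd. simpl. rewrite ln_1. lra. Qed.

Lemma Dd_le1 n : (1 <= n)%nat -> Dd n <= 1.
Proof.
  induction n as [|n IH]; intros Hn; [lia|].
  destruct (Nat.eq_dec n 0) as [->|Hn0]. rewrite Dd1; lra.
  rewrite Dd_step by lia. assert (H1 := IH ltac:(lia)).
  assert (Hr : 1 <= INR n) by (apply (le_INR 1); lia).
  assert (Hl := ln_I1 (/ INR n) ltac:(left; apply Rinv_0_lt_compat; lra)).
  assert (E : (INR n + 1/2) * (2 * / INR n / (2 + / INR n)) = 1) by (field; lra).
  assert ((INR n + 1/2) * (2 * / INR n / (2 + / INR n)) <= (INR n + 1/2) * ln (1 + / INR n)).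
  { apply Rmult_le_compat_l; lra. }
  lra.
Qed.

Lemma Dd_ge n : (1 <= n)%nat -> 1/2 + 1/(2 * INR n) <= Dd n.
Proof.
  induction n as [|n IH]; intros Hn; [lia|].
  destruct (Nat.eq_dec n 0) as [->|Hn0]. rewrite Dd1; simpl; lra.
  rewrite Dd_step by lia. assert (H1 := IH ltac:(lia)).
  assert (Hr : 1 <= INR n) by (apply (le_INR 1); lia).
  assert (Hl := ln_I2 (/ INR n) ltac:(left; apply Rinv_0_lt_compat; lra)).
  assert ((INR n + 1/2) * ln (1 + / INR n) <= (INR n + 1/2) * (/ INR n - (/ INR n)^2/2 + (/ INR n)^3/3)).
  { apply Rmult_le_compat_l; lra. }
  rewrite S_INR.
  assert (E : 1 - (INR n + 1/2) * (/ INR n - (/ INR n)^2/2 + (/ INR n)^3/3) + 1/(2 * INR n) - 1/(2*(INR n + 1))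
    = (5 * INR n ^ 2 - 3 * INR n - 2) / (12 * INR n ^ 3 * (INR n + 1))) by (field; lra).
  assert (0 <= (5 * INR n ^ 2 - 3 * INR n - 2) / (12 * INR n ^ 3 * (INR n + 1))).
  { apply Rmult_le_pos. nra. left; apply Rinv_0_lt_compat. 
    apply Rmult_lt_0_compat; [apply Rmult_lt_0_compat|]; try lra. apply pow_lt; lra. }
  lra.
Qed.

Fixpoint lsum (n m : nat) : R :=
  match m with O => 0 | S k => lsum n k + INR (S k) / INR (S k + 1) * ln (INR (n - S k)) end.
Fixpoint Asum (n m : nat) : R :=
  match m with O => 0 | S k => Asum n k + ln (INR (n - S k)) end.
Fixpoint Bsum (n m : nat) : R :=
  match m with O => 0 | S k => Bsum n k + ln (INR (n - S k)) / INR (S k + 1) end.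

Lemma rock_exp n m : rock_prod n m = exp (lsum n m).
Proof.
  induction m as [|m IH]; simpl rock_prod.
  - simpl. now rewrite exp_0.
  - change (lsum n (S m)) with (lsum n m + INR (S m) / INR (S m + 1) * ln (INR (n - S m))).
    rewrite IH, exp_plus. unfold Rpower. reflexivity.
Qed.

Lemma lsum_AB n m : lsum n m = Asum n m - Bsum n m.
Proof.
  induction m as [|m IH]. simpl; ring.
  change (lsum n (S m)) with (lsum n m + INR (S m) / INR (S m + 1) * ln (INR (n - S m))).
  change (Asum n (S m)) with (Asum n m + ln (INR (n - S m))).
  change (Bsum n (S m)) with (Bsum n m + ln (INR (n - S m)) / INR (S m + 1)).
  rewrite IH. rewrite plus_INR, S_INR. simpl (INR 1).
  assert (0 <= INR m) by apply pos_INR. field. lra.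
Qed.

Lemma A_lnfact m : forall p, Asum (p + m + 1) m + lnfact p = lnfact (p + m).
Proof.
  induction m as [|m IH]; intros p.
  - simpl. rewrite Nat.add_0_r. ring.
  - change (Asum (p + S m + 1) (S m)) with (Asum (p + S m + 1) m + ln (INR (p + S m + 1 - S m))).
    replace (p + S m + 1)%nat with (S p + m + 1)%nat by lia.
    replace (S p + m + 1 - S m)%nat with (S p) by lia.
    replace (p + S m)%nat with (S p + m)%nat by lia.
    rewrite <- (IH (S p)). change (lnfact (S p)) with (lnfact p + ln (INR (S p))). ring.
Qed.

Lemma term_bound n k : (1 <= k)%nat -> (k < n)%nat ->
  ln (INR (n - k)) <= ln (INR n) - INR k / INR n.
Proof.
  intros Hk Hkn. rewrite minus_INR by lia.
  assert (HkR : INR k < INR n) by (apply lt_INR; lia).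
  assert (0 <= INR k) by apply pos_INR.
  assert (E : INR n - INR k = INR n * ((INR n - INR k) / INR n)) by (field; lra).
  rewrite E, ln_mult.
  - pose proof (ln_sub1 ((INR n - INR k) / INR n) ltac:(apply Rdiv_lt_0_compat; lra)).
    assert (E2 : (INR n - INR k) / INR n - 1 = - (INR k / INR n)) by (field; lra). lra.
  - lra.
  - apply Rdiv_lt_0_compat; lra.
Qed.

Lemma harm m : (0 <= m) -> 1 / (m + 2) <= ln (m + 2) - ln (m + 1).
Proof.
  intros Hm.
  assert (E : m + 2 = (m + 1) * ((m + 2) / (m + 1))) by (field; lra).
  rewrite E at 2. rewrite ln_mult by (try apply Rdiv_lt_0_compat; lra).
  pose proof (ln_ge1 ((m+2)/(m+1)) ltac:(apply Rdiv_lt_0_compat; lra)).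
  assert (E2 : 1 - / ((m + 2) / (m + 1)) = 1 / (m + 2)) by (field; lra). lra.
Qed.

Lemma B_upper n m : (1 <= m)%nat -> (m < n)%nat ->
  Bsum n m <= ln (INR n) * ln (INR m + 1) - (2 * INR m / 3 - 1/6) / INR n.
Proof.
  intros Hm Hmn.
  assert (Hn : 1 < INR n) by (apply (lt_INR 1); lia).
  assert (HL : 0 <= ln (INR n)) by (rewrite <- ln_1; apply ln_le_m; lra).
  induction m as [|m IH]; [lia|].
  destruct (Nat.eq_dec m 0) as [->|Hm0].
  - simpl Bsum. pose proof (term_bound n 1 ltac:(lia) Hmn). simpl (INR 1) in *.
    simpl (INR (1+1)). pose proof ln_lt_2. replace (1+1) with 2 by ring.
    assert (ln (INR n) * (1/2) <= ln (INR n) * ln 2) by (apply Rmult_le_compat_l; lra).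
    assert (E : (2 * 1 / 3 - 1 / 6) / INR n = 1 / INR n / 2) by (field; lra).
    rewrite E. lra.
  - change (Bsum n (S m)) with (Bsum n m + ln (INR (n - S m)) / INR (S m + 1)).
    assert (H1 := IH ltac:(lia) ltac:(lia)).
    assert (H2 := term_bound n (S m) ltac:(lia) Hmn).
    assert (Hm1 : 1 <= INR m) by (apply (le_INR 1); lia).
    rewrite plus_INR, S_INR in *. simpl (INR 1) in *.
    assert (H3 := harm (INR m) ltac:(lra)).
    replace (INR m + 1 + 1) with (INR m + 2) by ring.
    assert (E : ln (INR (n - S m)) / (INR m + 2) <= (ln (INR n) - (INR m + 1) / INR n) / (INR m + 2)).
    { unfold Rdiv. apply Rmult_le_compat_r. left; apply Rinv_0_lt_compat; lra. exact H2. }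
    assert (ln (INR n) * (1 / (INR m + 2)) <= ln (INR n) * (ln (INR m + 2) - ln (INR m + 1)))
      by (apply Rmult_le_compat_l; lra).
    assert (E3 : (ln (INR n) - (INR m + 1) / INR n) / (INR m + 2) =
       ln (INR n) * (1 / (INR m + 2)) - ((INR m + 1)/(INR m + 2)) / INR n) by (field; lra).
    assert (E4 : 2/3 <= (INR m + 1)/(INR m + 2)).
    { apply Rmult_le_reg_r with (INR m + 2). lra. field_simplify; lra. }
    assert (E5 : 2/3 / INR n <= (INR m + 1)/(INR m + 2) / INR n).
    { unfold Rdiv at 1 3. apply Rmult_le_compat_r. left; apply Rinv_0_lt_compat; lra. exact E4. }
    assert (E6 : (2 * (INR m + 1) / 3 - 1 / 6) / INR n = (2 * INR m / 3 - 1 / 6) / INR n + 2/3 / INR n)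
      by (field; lra).
    rewrite E6. lra.
Qed.

Lemma B_mono n m : (3 <= m)%nat -> (m < n)%nat -> Bsum n 3 <= Bsum n m.
Proof.
  induction m as [|m IH]; intros H3 Hmn; [lia|].
  destruct (Nat.eq_dec m 2) as [->|Hm]. lra.
  change (Bsum n (S m)) with (Bsum n m + ln (INR (n - S m)) / INR (S m + 1)).
  assert (H1 := IH ltac:(lia) ltac:(lia)).
  assert (0 <= ln (INR (n - S m)) / INR (S m + 1)).
  { apply Rmult_le_pos. rewrite <- ln_1; apply ln_le_m; [lra|].
    apply (le_INR 1); lia. left; apply Rinv_0_lt_compat; apply (lt_INR 0); lia. }
  lra.
Qed.

Lemma sqrt_exp x : 0 < x -> sqrt x = exp (ln x / 2).
Proof. intros Hx. rewrite <- Rpower_sqrt by lra. unfold Rpower. f_equal. field. Qed.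

Theorem mainTheorem4 : exists N : nat, forall n : nat, (N <= n)%nat ->
  Rpower (INR n) (INR n - ln (INR n)) * sqrt (INR n) * sqrt (2 * PI) / exp (INR n)
    <= rockers n /\
  rockers n <=
  Rpower (INR n) (INR n) * sqrt (INR n) * sqrt (2 * PI)
    / (Rpower 2 (ln (INR n)) * exp (INR n)).
Proof.
  exists 81%nat. intros n Hn.
  set (nR := INR n). set (L := ln nR).
  assert (HnR : 81 <= nR) by (unfold nR; replace 81 with (INR 81) by (simpl; lra); apply le_INR; lia).
  assert (HL4 : 4 <= L).
  { assert (E : 81 = 3 ^ 4) by ring.
    assert (ln 81 <= L) by (apply ln_le_m; lra). rewrite E, ln_pow in H by lra.
    pose proof ln3_ge. simpl (INR 4) in H. lra. }
  pose proof ln2_le as Hl2. pose proof ln_lt_2 as Hl2'.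
  set (SS := Bsum n (n - 2)).
  assert (Hrock : rockers n = exp (Dd n + nR * L - nR + L / 2 - SS)).
  { unfold rockers. rewrite rock_exp, lsum_AB.
    pose proof (A_lnfact (n - 2) 1) as HA.
    replace (1 + (n - 2) + 1)%nat with n in HA by lia.
    replace (1 + (n - 2))%nat with (n - 1)%nat in HA by lia.
    assert (Hf : lnfact n = lnfact (n - 1) + ln (INR n)).
    { destruct n as [|k]; [lia|]. simpl (S k - 1)%nat. rewrite Nat.sub_0_r. reflexivity. }
    simpl (lnfact 1) in HA. rewrite ln_1 in HA.
    unfold Dd. fold nR. fold L. fold SS. fold nR in Hf. fold L in Hf.
    replace (lnfact n - nR * L + nR - L / 2 + nR * L - nR + L / 2 - SS)
      with (L + (Asum n (n - 2) - SS)) by lra.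
    rewrite exp_plus. unfold L. rewrite exp_ln. reflexivity. lra. }
  assert (H2pi : 2 * ln 2 <= ln (2 * PI) <= 3 * ln 2).
  { pose proof PI_4. pose proof PI2_1. split.
    - replace (2 * ln 2) with (ln (2 * 2)) by (rewrite ln_mult; lra). apply ln_le_m; lra.
    - replace (3 * ln 2) with (ln (2 * 2 * 2)) by (rewrite !ln_mult; lra). apply ln_le_m; lra. }
  assert (Hsq1 := sqrt_exp nR ltac:(lra)). fold L in Hsq1.
  assert (Hsq2 := sqrt_exp (2 * PI) ltac:(pose proof PI_RGT_0; lra)).
  set (lp := ln (2 * PI)) in *.
  rewrite Hrock, Hsq1, Hsq2. unfold Rpower. fold L.
  rewrite <- !exp_plus. unfold Rdiv. rewrite <- !exp_Ropp, <- !exp_plus.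
  split; apply exp_le.
  -
    assert (HS : SS <= L * L - 6/10).
    { pose proof (B_upper n (n - 2) ltac:(lia) ltac:(lia)) as HB. fold SS in HB.
      rewrite minus_INR in HB by lia. fold nR in HB. simpl (INR 2) in HB.
      assert (ln (nR - 2 + 1) <= L) by (apply ln_le_m; lra).
      assert (L * ln (nR - 2 + 1) <= L * L) by (apply Rmult_le_compat_l; lra).
      assert (6/10 <= (2 * (nR - 2) / 3 - 1 / 6) / nR).
      { apply Rmult_le_reg_r with nR. lra. field_simplify; lra. }
      replace (1+1) with 2 in HB by ring. fold L in HB. lra. }
    pose proof (Dd_ge n ltac:(lia)). fold nR in H.
    assert (0 <= 1 / (2 * nR)) by (unfold Rdiv; apply Rmult_le_pos; [lra|left; apply Rinv_0_lt_compat; lra]). nra.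
  -
    assert (HS : 13/12 * (L - ln 2) <= SS).
    { pose proof (B_mono n (n - 2) ltac:(lia) ltac:(lia)) as HB. fold SS in HB.
      assert (E : Bsum n 3 = ln (INR (n - 1)) / INR 2 + ln (INR (n - 2)) / INR 3 + ln (INR (n - 3)) / INR 4)
        by (cbn [Bsum]; rewrite Rplus_0_l; reflexivity).
      rewrite E in HB. rewrite !minus_INR in HB by lia. fold nR in HB. simpl (INR 1) in HB.
      simpl (INR 2) in HB. simpl (INR 3) in HB. simpl (INR 4) in HB.
      assert (H3 : L - ln 2 <= ln (nR - 3)).
      { replace (L - ln 2) with (ln (nR / 2)).
        apply ln_le_m; lra. unfold Rdiv; rewrite ln_mult, ln_Rinv; try lra. unfold L; ring. }
      assert (ln (nR - 3) <= ln (nR - 2)) by (apply ln_le_m; lra).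
      assert (ln (nR - 3) <= ln (nR - 1)) by (apply ln_le_m; lra).
      replace (1+1+1+1) with 4 in HB by ring. replace (1+1+1) with 3 in HB by ring. replace (1+1) with 2 in HB by ring. lra. }
    pose proof (Dd_le1 n ltac:(lia)). fold nR in H.
    assert (L * ln 2 <= L * (71/100)) by (apply Rmult_le_compat_l; lra).
    nra.
Qed.
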